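(* For every integer $k\geq1$ and every polynomial $r(x)$, the function $$H(x,y)=\frac{\big[(1-r(x)^2)^{2k}+2k\,r(x)(1-r(x)^2)^k y+k y^2\big]^{2k-1}}{\big[(1-r(x)^2)^{2k-1}+(2k-1)\,r(x)(1-r(x)^2)^{k-1}y+\tfrac{2k-1}{2}y^2\big]^{2k}}$$ is a first integral of a Li\'enard type equation of the form $$\frac{dx}{dt}=-y+r_2(x),\qquad \frac{dy}{dt}=y\,r_4(x)$$ for suitable polynomials $r_2,r_4$. *)

(* Defs.v *)
From HB Require Import structures.
From mathcomp Require Import all_boot all_order all_algebra.
From mathcomp Require Import all_classical all_reals all_analysis.
Set Implicit Arguments. Unset Strict Implicit. Unset Printing Implicit Defensive.
Import Order.TTheory GRing.Theory Num.Theory.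
Import numFieldNormedType.Exports.
Local Open Scope ring_scope.
Local Open Scope classical_set_scope.

Definition Hnum {R : realType} (k : nat) (r : {poly R}) (x y : R) : R :=
  (1 - r.[x] ^+ 2) ^+ (2 * k) + (2 * k)%:R * r.[x] * (1 - r.[x] ^+ 2) ^+ k * y
  + k%:R * y ^+ 2.

Definition Hden {R : realType} (k : nat) (r : {poly R}) (x y : R) : R :=
  (1 - r.[x] ^+ 2) ^+ (2 * k - 1)
  + (2 * k - 1)%:R * r.[x] * (1 - r.[x] ^+ 2) ^+ (k - 1) * y
  + ((2 * k - 1)%:R / 2) * y ^+ 2.

Definition Hfun {R : realType} (k : nat) (r : {poly R}) (x y : R) : R :=
  Hnum k r x y ^+ (2 * k - 1) / Hden k r x y ^+ (2 * k).

Definition first_integral {R : realType} (H P Q : R -> R -> R) (U : set (R * R))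
  : Prop :=
  forall x y, U (x, y) ->
    derivable (fun s => H s y) x 1 /\ derivable (fun s => H x s) y 1 /\
    derive1 (fun s => H s y) x * P x y + derive1 (fun s => H x s) y * Q x y = 0.

(* Main.v *)
Require Import Defs.
From HB Require Import structures.
From mathcomp Require Import all_boot all_order all_algebra.
From mathcomp Require Import all_classical all_reals all_analysis.
From mathcomp Require Import ring lra zify.
Import Order.TTheory GRing.Theory Num.Theory.
Import numFieldNormedType.Exports.
Local Open Scope ring_scope.
Local Open Scope classical_set_scope.

Lemma dquot {R : realType} (P Q : {poly R}) m n s : Q.[s] ^+ n != 0 ->
  derivable (fun t => P.[t]^+m / Q.[t]^+n) s 1 /\
  derive1 (fun t => P.[t]^+m / Q.[t]^+n) s =
   P.[s]^+m * (- (Q.[s]^+n) ^- 2 * ((n%:R * Q.[s]^+n.-1) * Q^`().[s]))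
   + (Q.[s]^+n)^-1 * ((m%:R * P.[s]^+m.-1) * P^`().[s]).
Proof.
move=> Qn0.
have hP : is_derive s (1:R) (fun t => P.[t]^+m) ((m%:R * P.[s]^+m.-1) *: P^`().[s]).
  have -> : (fun t => P.[t]^+m) = (horner P)^+m by apply/funext => t; rewrite exprfctE.
  exact: is_deriveX.
have hQ : is_derive s (1:R) (fun t => Q.[t]^+n) ((n%:R * Q.[s]^+n.-1) *: Q^`().[s]).
  have -> : (fun t => Q.[t]^+n) = (horner Q)^+n by apply/funext => t; rewrite exprfctE.
  exact: is_deriveX.
have hV := @is_deriveV R (fun t => Q.[t]^+n) s _ 1 Qn0 hQ.
have hM := is_deriveM hP hV.
split; first by case: hM.
rewrite derive1E; case: hM => _ ->.
by rewrite /GRing.scale /=.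
Qed.

Section S.
Variable R : realType.
Variable k : nat.
Variable r : {poly R}.
Let U : {poly R} := 1 - r^+2.
Definition Np (y : R) : {poly R} :=
  U^+(2*k) + ((2*k)%:R * y) *: (r * U^+k) + (k%:R * y^+2)%:P.
Definition Dp (y : R) : {poly R} :=
  U^+(2*k-1) + ((2*k-1)%:R * y) *: (r * U^+(k-1)) + ((2*k-1)%:R / 2 * y^+2)%:P.
Definition Nq (x : R) : {poly R} :=
  ((1 - r.[x]^+2)^+(2*k))%:P + ((2*k)%:R * r.[x] * (1 - r.[x]^+2)^+k) *: 'X + k%:R *: 'X^2.
Definition Dq (x : R) : {poly R} :=
  ((1 - r.[x]^+2)^+(2*k-1))%:P + ((2*k-1)%:R * r.[x] * (1 - r.[x]^+2)^+(k-1)) *: 'X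
   + ((2*k-1)%:R / 2) *: 'X^2.
Lemma mulLE (a b : R) : GRing.GRing_mul__canonical__SemiGroup_Law R a b = a * b.
Proof. by []. Qed.
Lemma NpE x y : (Np y).[x] = Hnum k r x y.
Proof. rewrite /Np /Hnum /U !(hornerD, hornerN, hornerZ, hornerM, hornerC, hornerX, horner_exp, hornerXn, hornerM, hornerC, hornerE); rewrite ?mulLE; ring. Qed.
Lemma DpE x y : (Dp y).[x] = Hden k r x y.
Proof. rewrite /Dp /Hden /U !(hornerD, hornerN, hornerZ, hornerM, hornerC, hornerX, horner_exp, hornerXn, hornerE); rewrite ?mulLE; ring. Qed.
Lemma NqE x y : (Nq x).[y] = Hnum k r x y.
Proof. rewrite /Nq /Hnum !(hornerD, hornerN, hornerZ, hornerM, hornerC, hornerX, horner_exp, hornerXn, hornerE); rewrite ?mulLE; ring. Qed.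
Lemma DqE x y : (Dq x).[y] = Hden k r x y.
Proof. rewrite /Dq /Hden !(hornerD, hornerN, hornerZ, hornerM, hornerC, hornerX, horner_exp, hornerXn, hornerE); rewrite ?mulLE; ring. Qed.
Definition r2p : {poly R} := r * U^+(k-1) * ((2*k-2)%:R%:P - (2*k+1)%:R *: U).
Definition r4p : {poly R} := r^`() * ( - ((2*k-1)%:R *: (U^+k - (2*k)%:R *: (r^+2 * U^+(k-1))))
   + (2*k)%:R *: (U^+(k-1) - (2*(k-1))%:R *: (r^+2 * U^+(k-2))) ).

Lemma main_sec : (1 <= k)%N ->
    first_integral (Hfun k r)
      (fun x y => - y + r2p.[x]) (fun x y => y * r4p.[x])
      [set p | Hden k r p.1 p.2 != 0].
Proof.
move=> hk x y /= hD.
have eHx : (fun s => Hfun k r s y) = (fun t => (Np y).[t]^+(2*k-1) / (Dp y).[t]^+(2*k)).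
  by apply/funext => t; rewrite NpE DpE.
have eHy : (fun s => Hfun k r x s) = (fun t => (Nq x).[t]^+(2*k-1) / (Dq x).[t]^+(2*k)).
  by apply/funext => t; rewrite NqE DqE.
have hDx : (Dp y).[x]^+(2*k) != 0 by rewrite DpE expf_neq0.
have hDy : (Dq x).[y]^+(2*k) != 0 by rewrite DqE expf_neq0.
have [d1 e1] := dquot (Np y) (Dp y) (2*k-1) (2*k) x hDx.
have [d2 e2] := dquot (Nq x) (Dq x) (2*k-1) (2*k) y hDy.
rewrite eHx eHy; split => //; split => //.
rewrite e1 e2 NpE DpE NqE DqE.
set a := Hnum k r x y. set b := Hden k r x y.
have [n kn] : exists n, k = n.+1 by exists k.-1; rewrite prednK.
have E1 : (2 * k - 1 = (2*n).+1)%N by rewrite kn mulnS subn1.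
have E2 : (2 * k = (2*n).+2)%N by rewrite kn mulnS addnC addn2.
rewrite E1 E2 /= !exprS.
set A := a ^+ (2*n). set Nx := (Np y)^`().[x]. set Dx := (Dp y)^`().[x].
set Ny := (Nq x)^`().[y]. set Dy := (Dq x)^`().[y].
set P := - y + r2p.[x]. set Q := y * r4p.[x].
have bn0 : b != 0 by [].
have Bn0 : b ^+ (2*n) != 0 by rewrite expf_neq0.
set B := b ^+ (2*n).
suff core : (((2 * n).+1%:R * Nx * b - (2 * n).+2%:R * a * Dx) * P + ((2 * n).+1%:R * Ny * b - (2 * n).+2%:R * a * Dy) * Q = 0).
  apply: (@eq_trans _ _ (A / (b*b*b*B) * (((2 * n).+1%:R * Nx * b - (2 * n).+2%:R * a * Dx) * P + ((2 * n).+1%:R * Ny * b - (2 * n).+2%:R * a * Dy) * Q))).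
    by rewrite expr0; field; rewrite ?bn0 ?Bn0.
  by rewrite core mulr0.
rewrite {}/Nx {}/Dx {}/Ny {}/Dy {}/P {}/Q; clear bn0 Bn0 hDx hDy eHx eHy d1 d2 e1 e2; rewrite {}/B {}/A {}/a {}/b.
rewrite /Np /Dp /Nq /Dq /r2p /r4p /U /Hnum /Hden.
rewrite !(derivD, derivN, derivB, derivZ, derivM, deriv_exp, derivC, derivX, derivXn).
rewrite !(hornerD, hornerN, hornerZ, hornerM, hornerC, hornerX, horner_exp, hornerXn, hornerMn, hornerE) ?mulLE.
rewrite kn.
set s := r.[x]. set sp := r^`().[x].
rewrite !expr2.
try (rewrite (_ : ((2 * n.+1 - 1).-1 = n+n)%N); last by lia).
try (rewrite (_ : ((2 * n.+1).-1 = n+n+1)%N); last by lia).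
try (rewrite (_ : ((n.+1 - 1).-1 = n.-1)%N); last by lia).
try (rewrite (_ : ((2 * (n.+1 - 1)) = n+n)%N); last by lia).
try (rewrite (_ : ((2 * n.+1 - 1) = n+n+1)%N); last by lia).
try (rewrite (_ : ((2 * n.+1 - 2) = n+n)%N); last by lia).
try (rewrite (_ : ((2 * n.+1 + 1) = n+n+3)%N); last by lia).
try (rewrite (_ : ((2 * n.+1) = n+n+2)%N); last by lia).
try (rewrite (_ : ((n.+1 - 2) = n.-1)%N); last by lia).
try (rewrite (_ : ((n.+1 - 1) = n)%N); last by lia).
try (rewrite (_ : (n.+1.-1 = n)%N); last by lia).
try (rewrite (_ : ((2 * n).+1 = n+n+1)%N); last by lia).
try (rewrite (_ : ((2 * n).+2 = n+n+2)%N); last by lia).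
try (rewrite (_ : (n.+1 = n+1)%N); last by lia).
set u := 1 - s * s.
rewrite !exprD.
case: n kn E1 E2 => [|m] _ _ _.
  by rewrite /= /u; field.
rewrite !exprS /= /u.
move: ((1 - s*s)^+m) => w.
by field.
Qed.

End S.


Theorem mainTheorem8 (R : realType) (k : nat) (r : {poly R}) :
  (1 <= k)%N ->
  exists r2 r4 : {poly R},
    first_integral (Hfun k r)
      (fun x y => - y + r2.[x]) (fun x y => y * r4.[x])
      [set p | Hden k r p.1 p.2 != 0].
Proof.
move=> hk; exists (@r2p R k r), (@r4p R k r); exact: main_sec.
Qed.
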